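(* Let $F$ be a Henselian discrete valuation field with ring of integers $\mathcal{O}_F$, uniformizer $t$, and infinite residue field $K$; write $x\mapsto\bar{x}$ for the residue map. Let $q\in\mathcal{O}_F[X]$ be a polynomial of degree $\ge1$ such that $q'$ has non-zero image in $K[X]$, and let $A\in\{1,2\}$. Then there exist finitely many $b_1,\dots,b_m\in\mathcal{O}_F$ such that whenever $b\in\mathcal{O}_F$ and the set $\{x\in\mathcal{O}_F:q(x)\in b+t^A\mathcal{O}_F,\ \bar{q}'(\bar{x})=0\}$ is non-empty, we have $b\equiv b_i\bmod t^A\mathcal{O}_F$ for some $i\in\{1,\dots,m\}$.
   Context: $\bar{q}$ denotes the image of $q$ in $K[X]$. *)

(* Defs.v *)
From HB Require Import structures.
From mathcomp Require Import all_boot all_order all_algebra.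
Set Implicit Arguments. Unset Strict Implicit. Unset Printing Implicit Defensive.
Import Order.TTheory GRing.Theory Num.Theory.
Local Open Scope ring_scope.

(* A discrete valuation on a field F, given as v : F -> int on nonzero
   elements (the value at 0, conventionally +oo, is never consulted). *)
Definition discrete_valuation (F : fieldType) (v : F -> int) : Prop :=
  [/\ forall x y : F, x != 0 -> y != 0 -> v (x * y) = v x + v y,
      forall x y : F, x != 0 -> y != 0 -> x + y != 0 ->
                      Num.min (v x) (v y) <= v (x + y)
    & exists t : F, t != 0 /\ v t = 1].

Definition int_ring (F : fieldType) (v : F -> int) (x : F) : Prop :=
  x = 0 \/ 0 <= v x.

Definition max_ideal (F : fieldType) (v : F -> int) (x : F) : Prop :=
  x = 0 \/ 0 < v x.

Definition uniformizer (F : fieldType) (v : F -> int) (t : F) : Prop :=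
  t != 0 /\ v t = 1.

Definition poly_over_O (F : fieldType) (v : F -> int) (p : {poly F}) : Prop :=
  forall i, int_ring v p`_i.

Definition henselian (F : fieldType) (v : F -> int) : Prop :=
  forall (p : {poly F}) (a : F),
    p \is monic -> poly_over_O v p -> int_ring v a ->
    max_ideal v p.[a] -> ~ max_ideal v (p^`()).[a] ->
    exists b : F, [/\ int_ring v b, p.[b] = 0 & max_ideal v (b - a)].

Definition infinite_residue_field (F : fieldType) (v : F -> int) : Prop :=
  exists f : nat -> F, (forall n, int_ring v (f n)) /\
    (forall n m, n != m -> ~ max_ideal v (f n - f m)).

Definition in_tpow_ideal (F : fieldType) (v : F -> int) (t : F) (A : nat)
  (y : F) : Prop :=
  exists z : F, int_ring v z /\ y = t ^+ A * z.

(* the image of p in K[X] is non-zero: some coefficient is not in m_F *)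
Definition nonzero_residue_poly (F : fieldType) (v : F -> int) (p : {poly F})
  : Prop := exists i, ~ max_ideal v p`_i.

(* Main.v *)
Require Import Defs.
From HB Require Import structures.
From mathcomp Require Import all_boot all_order all_algebra.
From mathcomp Require Import ring zify.
From Stdlib Require Import Classical.
Import Order.TTheory GRing.Theory Num.Theory.
Local Open Scope ring_scope.

Section Val.
Variables (F : fieldType) (v : F -> int).
Hypothesis dv : discrete_valuation v.

Definition vge (n : int) (x : F) : Prop := x = 0 \/ n <= v x.

Lemma vM {x y} : x != 0 -> y != 0 -> v (x * y) = v x + v y.
Proof. by case: dv => h _ _ ; apply: h. Qed.

Lemma v1 : v 1 = 0.
Proof. have := vM (oner_neq0 F) (oner_neq0 F). rewrite mulr1 => h. by have := congr1 (fun z => z - v 1) h; rewrite /= subrr addrK. Qed.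

Lemma vN {x} : x != 0 -> v (- x) = v x.
Proof.
move=> nx.
have n1 : (-1 : F) != 0 by rewrite oppr_eq0 oner_eq0.
have h := vM n1 n1. rewrite mulrNN mulr1 v1 in h.
by rewrite -mulN1r vM // -(addr0 (v x)) addrC; congr (_ + _); lia.
Qed.

Lemma vgeD n x y : vge n x -> vge n y -> vge n (x + y).
Proof.
have [->|nx] := eqVneq x 0; first by rewrite add0r.
have [->|ny] := eqVneq y 0; first by rewrite addr0.
case=> [/eqP|hx]; first by rewrite (negbTE nx).
case=> [/eqP|hy]; first by rewrite (negbTE ny).
have [->|nxy] := eqVneq (x + y) 0; first by left.
right. case: dv => _ h _. apply: le_trans (h x y nx ny nxy).
by rewrite le_min hx hy.
Qed.

Lemma vgeN n x : vge n x -> vge n (- x).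
Proof.
have [->|nx] := eqVneq x 0; first by rewrite oppr0; left.
case=> [/eqP|hx]; first by rewrite (negbTE nx).
by right; rewrite vN.
Qed.

Lemma vgeB n x y : vge n x -> vge n y -> vge n (x - y).
Proof. by move=> hx hy; apply: vgeD => //; apply: vgeN. Qed.

Lemma vgeM n m x y : vge n x -> vge m y -> vge (n + m) (x * y).
Proof.
case=> [->|hx]; first by rewrite mul0r; left.
case=> [->|hy]; first by rewrite mulr0; left.
have [->|nx] := eqVneq x 0; first by rewrite mul0r; left.
have [->|ny] := eqVneq y 0; first by rewrite mulr0; left.
by right; rewrite vM // lerD.
Qed.

Lemma vge_le n m x : n <= m -> vge m x -> vge n x.
Proof. by move=> nm [->|h]; [left|right; apply: le_trans h]. Qed.

Lemma vge_cancel n x y : vge n (x * y) -> y != 0 -> v y = 0 -> vge n x.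
Proof.
move=> h ny vy; case: h => [/eqP|h].
  by rewrite mulf_eq0 (negbTE ny) orbF => /eqP ->; left.
have [->|nx] := eqVneq x 0; first by left.
by right; move: h; rewrite vM // vy addr0.
Qed.

Lemma maxE x : max_ideal v x <-> vge 1 x.
Proof. by rewrite /max_ideal /vge gtz0_ge1. Qed.

Lemma vge0_1 : vge 0 (1 : F).
Proof. by right; rewrite v1. Qed.

Lemma vge0_nat k : vge 0 (k%:R : F).
Proof.
elim: k => [|k IH]; first by left.
by rewrite -addn1 natrD; apply: vgeD => //; apply: vge0_1.
Qed.

Lemma vge0_exp x k : vge 0 x -> vge 0 (x ^+ k).
Proof.
move=> hx; elim: k => [|k IH]; first by apply: vge0_1.
by rewrite exprS; have := vgeM _ _ _ _ hx IH; rewrite addr0.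
Qed.

Lemma vge_sum n (I : finType) (f : I -> F) :
  (forall i, vge n (f i)) -> vge n (\sum_i f i).
Proof.
move=> h; apply: (big_ind (vge n)) => //; first by left.
by move=> ???; apply: vgeD.
Qed.

Lemma vge0_horner p a : poly_over_O v p -> vge 0 a -> vge 0 p.[a].
Proof.
move=> hp ha; rewrite horner_coef; apply: vge_sum => i.
by have := vgeM _ _ _ _ (hp i) (vge0_exp _ i ha); rewrite addr0.
Qed.

Lemma over_deriv p : poly_over_O v p -> poly_over_O v p^`().
Proof.
move=> hp i; rewrite coef_deriv -mulr_natr.
by have := vgeM _ _ _ _ (hp i.+1) (vge0_nat i.+1); rewrite addr0.
Qed.


Lemma taylor2 p : poly_over_O v p -> forall a h, vge 0 a -> vge 0 h ->
  exists r, vge 0 r /\ p.[a + h] = p.[a] + h * p^`().[a] + h ^+ 2 * r.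
Proof.
elim/poly_ind: p => [|p c IH] hP a h ha hh.
  by exists 0; split; [left| rewrite deriv0 !horner0 !mulr0 !addr0].
have hp : poly_over_O v p.
  by move=> i; have := hP i.+1; rewrite coefD coefMX coefC /= addr0.
have [r [hr e]] := IH hp a h ha hh.
exists (p^`().[a] + r * (a + h)); split.
  apply: vgeD; first exact: vge0_horner (over_deriv _ hp) ha.
  by have := vgeM _ _ _ _ hr (vgeD _ _ _ ha hh); rewrite addr0.
rewrite derivMXaddC !hornerMXaddC hornerD hornerM hornerX e; ring.
Qed.

Lemma coef_mulXsubC (s : {poly F}) a i :
  (s * ('X - a%:P))`_i = (if i == 0%N then 0 else s`_i.-1) - s`_i * a.
Proof. by rewrite mulrBr coefB coefMX coefMC. Qed.

Lemma quot_over p a s : poly_over_O v p -> vge 0 a ->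
  p = s * ('X - a%:P) -> poly_over_O v s.
Proof.
move=> hp ha e.
suff H : forall k i, (size s <= i + k)%N -> vge 0 s`_i.
  by move=> i; apply: (H (size s)); rewrite leq_addl.
elim=> [|k IH] i hi; first by rewrite nth_default; [left | rewrite addn0 in hi].
have E : s`_i = p`_i.+1 + s`_i.+1 * a by rewrite e coef_mulXsubC /= subrK.
rewrite E; apply: vgeD; first exact: hp.
have := vgeM _ _ _ _ (IH i.+1 _) ha; rewrite addr0; apply.
by rewrite addSn -addnS.
Qed.

Fixpoint resdist (L : seq F) : Prop :=
  if L is x :: L' then (forall y, y \in L' -> ~ vge 1 (x - y)) /\ resdist L'
  else True.

Lemma bound L : resdist L -> forall p, poly_over_O v p ->
  (forall x, x \in L -> vge 0 x /\ vge 1 p.[x]) ->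
  (size p <= size L)%N -> forall i, vge 1 p`_i.
Proof.
elim: L => [|x L IH] /= hL p hp hx hs i.
  by move: hs; rewrite leqn0 size_poly_eq0 => /eqP ->; rewrite coef0; left.
case: hL => hxL hL.
have [hx0 hpx] := hx x (mem_head _ _).
have hc : vge 0 p.[x] by apply: vge0_horner.
have : root (p - p.[x]%:P) x by rewrite /root !hornerE subrr.
case/factor_theorem => s es.
have hs' : poly_over_O v s.
  apply: (quot_over _ _ _ _ hx0 es).
  by move=> j; rewrite coefB coefC; apply: vgeB (hp j) _; case: eqP => _ //; left.
have hss : (size s <= size L)%N.
  have [->|ns] := eqVneq s 0; first by rewrite size_poly0.
  have := size_polyD p (- p.[x]%:P); rewrite size_polyN es.
  rewrite size_mul ?polyXsubC_eq0 // size_XsubC addn2 /= => h.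
  rewrite -ltnS; apply: leq_trans h _; rewrite geq_max hs /=.
  exact: leq_trans (size_polyC_leq1 _) _.
have hyL : forall y, y \in L -> vge 0 y /\ vge 1 s.[y].
  move=> y yL; have /hx [hy0 hpy] : y \in x :: L by rewrite inE yL orbT.
  split => //.
  have e2 : s.[y] * (y - x) = p.[y] - p.[x].
    by have := congr1 (fun P => P.[y]) es; rewrite /= !hornerE => ->.
  have h1 : vge 1 (s.[y] * (y - x)) by rewrite e2; apply: vgeB.
  have nyx : ~ vge 1 (y - x).
    by move=> /(vgeN 1) H; apply: (hxL y yL); rewrite opprB in H.
  have nz : y - x != 0 by apply/eqP => e0; apply: nyx; left.
  apply: (vge_cancel _ _ _ h1 nz).
  have [/eqP|h0] := vgeB 0 _ _ hy0 hx0; first by rewrite (negbTE nz).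
  have h2 : v (y - x) < 1 by rewrite ltNge; apply/negP => H; apply: nyx; right.
  lia.
have := IH hL s hs' hyL hss => hsi.
have -> : p = s * ('X - x%:P) + p.[x]%:P by rewrite -es subrK.
rewrite coefD coef_mulXsubC coefC; case: i => [|j] /=.
  apply: vgeD => //; apply: vgeB; first by left.
  by have := vgeM _ _ _ _ (hsi 0%N) hx0; rewrite addr0.
rewrite addr0; apply: vgeB => //.
by have := vgeM _ _ _ _ (hsi j.+1) hx0; rewrite addr0.
Qed.

Lemma vtpow t n : uniformizer v t -> t ^+ n != 0 /\ v (t ^+ n) = n%:Z.
Proof.
case=> nt vt; split; first by rewrite expf_neq0.
elim: n => [|n IH]; first by rewrite expr0 v1.
by rewrite exprS vM ?expf_neq0 // vt IH intS.
Qed.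

End Val.

Arguments vge {F} v n x.
Arguments vM {F v} dv {x y}. Arguments v1 {F v}. Arguments vN {F v} dv {x}. Arguments vgeD {F v}.
Arguments vgeN {F v}. Arguments vgeB {F v}. Arguments vgeM {F v}. Arguments vge_le {F v}.
Arguments vge_cancel {F v}. Arguments maxE {F v}. Arguments vge0_1 {F v}. Arguments vge0_nat {F v}.
Arguments vge0_exp {F v}. Arguments vge_sum {F v}. Arguments vge0_horner {F v}.
Arguments over_deriv {F v}. Arguments taylor2 {F v}. Arguments quot_over {F v}.
Arguments resdist {F} v L. Arguments bound {F v}. Arguments vtpow {F v}.

Lemma tpow_to (F : fieldType) (v : F -> int) (dv : discrete_valuation v) t A y :
  uniformizer v t -> in_tpow_ideal v t A y -> vge v A%:Z y.
Proof.
move=> ut [z [hz ->]]; have [nt vt] := vtpow dv t A ut.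
have h : vge v A%:Z (t ^+ A) by right; rewrite vt.
by have := vgeM dv _ _ _ _ h hz; rewrite addr0.
Qed.

Lemma to_tpow (F : fieldType) (v : F -> int) (dv : discrete_valuation v) t A y :
  uniformizer v t -> vge v A%:Z y -> in_tpow_ideal v t A y.
Proof.
move=> ut hy; have [nt vt] := vtpow dv t A ut.
have [->|ny] := eqVneq y 0; first by exists 0; split; [left | rewrite mulr0].
exists (y / t ^+ A); split; last by rewrite mulrC divfK.
have nz : y / t ^+ A != 0 by rewrite mulf_neq0 ?invr_eq0.
right; case: hy => [/eqP|hy]; first by rewrite (negbTE ny).
have e : y = t ^+ A * (y / t ^+ A) by rewrite mulrC divfK.
move: hy; rewrite {1}e (vM dv nt nz) vt.
by rewrite lerDl.
Qed.

Theorem lemma4p7 (F : fieldType) (v : F -> int) (t : F) (q : {poly F})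
    (A : nat) :
  discrete_valuation v -> henselian v -> infinite_residue_field v ->
  uniformizer v t ->
  poly_over_O v q -> (1 < size q)%N ->
  nonzero_residue_poly v (q^`()) ->
  (A = 1%N \/ A = 2%N) ->
  exists bs : seq F,
    (forall bi, bi \in bs -> int_ring v bi) /\
    forall b : F, int_ring v b ->
      (exists x : F, [/\ int_ring v x, in_tpow_ideal v t A (q.[x] - b)
                        & max_ideal v (q^`()).[x]]) ->
      exists2 bi, bi \in bs & in_tpow_ideal v t A (b - bi).
Proof.
move=> dv hens inf ut hq sq hnz hA.
pose V := @vge F v.
set p := q^`() in hnz *.
have hp : poly_over_O v p by exact: over_deriv dv _ hq.
pose C x := V 0 x /\ V 1 p.[x].
pose valid L := resdist v L /\ forall x, x \in L -> C x.
have bnd : forall L, valid L -> (size L < size p)%N.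
  move=> L [hL hC]; rewrite ltnNge; apply/negP => hs.
  case: hnz => i; rewrite maxE; apply.
  exact: (bound dv _ hL _ hp hC hs i).
have [L [[hL hC] hcov]] : exists L, valid L /\
    forall x, C x -> exists2 a, a \in L & V 1 (x - a).
  apply: NNPP => H.
  have ex : forall n, exists L, valid L /\ size L = n.
    elim=> [|n [L [[hL hC] hs]]]; first by exists [::].
    have : ~ (forall x, C x -> exists2 a, a \in L & V 1 (x - a)).
      by move=> hc; apply: H; exists L.
    move/not_all_ex_not => [x hx].
    have [Cx nx] := imply_to_and _ _ hx.
    exists (x :: L); split; last by rewrite /= hs.
    split; first split => //.
      by move=> y yL hy; apply: nx; exists y.
    by move=> z; rewrite inE => /orP [/eqP ->|/hC].
  have [L0 [hv hs]] := ex (size p).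
  by have := bnd L0 hv; rewrite hs ltnn.
exists [seq q.[a] | a <- L]; split.
  move=> bi /mapP [a aL ->]; exact: (vge0_horner dv _ _ hq (hC a aL).1).
move=> b hb [x [hx hxb hpx]].
have Cx : C x by split => //; apply/maxE.
have [a aL hxa] := hcov x Cx.
exists q.[a]; first by apply/mapP; exists a.
have [Ca0 Ca1] := hC a aL.
have hh : V 0 (x - a) by apply: (vgeB dv).
have [r [hr e]] := taylor2 dv _ hq _ _ Ca0 hh.
rewrite addrC subrK in e.
have h2 : V (1 + 1) (q.[x] - q.[a]).
  rewrite e.
  have -> : forall u w z : F, u + w + z - u = w + z by move=> *; ring.
  apply: (vgeD dv).
    exact: (vgeM dv _ _ _ _ hxa Ca1).
  rewrite expr2.
  have := vgeM dv _ _ _ _ (vgeM dv _ _ _ _ hxa hxa) hr; rewrite addr0; exact.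
apply: (@to_tpow _ _ dv) => //.
have -> : b - q.[a] = (q.[x] - q.[a]) - (q.[x] - b) by ring.
have h3 : V A (q.[x] - b) := @tpow_to _ _ dv t A _ ut hxb.
have lA : (A%:Z <= 1 + 1) by case: hA => ->.
have h4 : V A (q.[x] - q.[a]) := vge_le _ _ _ lA h2.
exact: (vgeB dv _ _ _ h4 h3).
Qed.
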